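(* Let $1\leq s\leq r\leq n$ and $d=n+r+2$. Then the locally closed locus $X^{n,r,s}$ is irreducible.
   Context: $\mathbb{K}$ is algebraically closed of characteristic zero. $X^{n,r,s}$ is the set of $n$-tuples $(A_1,\dots,A_n)$ of pairwise commuting $d\times d$ matrices over $\mathbb{K}$ for which there is a basis of $\mathbb{K}^d$ in which each $A_i$ has the block form $$A_i=\begin{bmatrix}0 & b_i^T & c_i^T & 0\\ 0&0&D_i&0\\ 0&0&0&f_i\\ 0&0&0&0\end{bmatrix}$$ with diagonal blocks of sizes $1,r,n,1$, where $b_i\in\mathbb{K}^r$, $c_i,f_i\in\mathbb{K}^n$, $D_i\in\mathbb{K}^{r\times n}$, such that $f_1,\dots,f_n$ are linearly independent, the matrices $D_1,\dots,D_n$ have trivial common cokernel (i.e. $\bigcap_i\ker D_i^T=0$), and $\dim_{\mathbb{K}}\operatorname{Span}\{b_1,\dots,b_n\}=s$. *)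

(* Defs.v *)
From HB Require Import structures.
From mathcomp Require Import all_boot all_order all_algebra.
Set Implicit Arguments. Unset Strict Implicit. Unset Printing Implicit Defensive.
Import GRing.Theory.
Local Open Scope ring_scope.

(* Tuples (A_1,...,A_n) of m x m matrices: points of the affine space K^(n*m*m). *)
Definition mxtuple (K : fieldType) (n m : nat) := 'I_n -> 'M[K]_m.

Inductive polyfun (K : fieldType) (n m : nat) : (mxtuple K n m -> K) -> Prop :=
| pf_const (c : K) : polyfun (fun _ => c)
| pf_coord (i : 'I_n) (j k : 'I_m) : polyfun (fun A => A i j k)
| pf_add f g : polyfun f -> polyfun g -> polyfun (fun A => f A + g A)
| pf_mul f g : polyfun f -> polyfun g -> polyfun (fun A => f A * g A).

Definition zariski_closed (K : fieldType) (n m : nat) (Z : mxtuple K n m -> Prop) :=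
  exists F : (mxtuple K n m -> K) -> Prop,
    (forall f, F f -> polyfun f) /\
    (forall A, Z A <-> (forall f, F f -> f A = 0)).

Definition zariski_irreducible (K : fieldType) (n m : nat) (S : mxtuple K n m -> Prop) :=
  (exists A, S A) /\
  forall Z1 Z2 : mxtuple K n m -> Prop, zariski_closed Z1 -> zariski_closed Z2 ->
    (forall A, S A -> Z1 A \/ Z2 A) ->
    (forall A, S A -> Z1 A) \/ (forall A, S A -> Z2 A).

(* The block matrix with diagonal blocks of sizes 1, r, n, 1:
     [ 0  b^T  c^T  0 ]
     [ 0   0    D   0 ]
     [ 0   0    0   f ]
     [ 0   0    0   0 ]
   of size (1 + r) + (n + 1) = n + r + 2.  Here bT = b^T is a row, cT = c^T. *)
Definition blockform (K : fieldType) (n r : nat)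
  (bT : 'rV[K]_r) (cT : 'rV[K]_n) (D : 'M[K]_(r, n)) (f : 'cV[K]_n)
  : 'M[K]_((1 + r) + (n + 1)) :=
  block_mx (block_mx 0 bT 0 0 : 'M_(1 + r, 1 + r))
           (block_mx cT 0 D 0 : 'M_(1 + r, n + 1))
           0
           (block_mx 0 f 0 0 : 'M_(n + 1, n + 1)).

Definition Xnrs (K : fieldType) (n r s : nat)
  (A : mxtuple K n ((1 + r) + (n + 1))) : Prop :=
  (forall i j, A i *m A j = A j *m A i) /\
  exists (P : 'M[K]_((1 + r) + (n + 1))) (bT : 'I_n -> 'rV[K]_r)
         (cT : 'I_n -> 'rV[K]_n) (D : 'I_n -> 'M[K]_(r, n)) (f : 'I_n -> 'cV[K]_n),
    [/\ P \in unitmx,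
        forall i, A i = P *m blockform (bT i) (cT i) (D i) (f i) *m invmx P,
        row_free (\matrix_(i < n) (f i)^T),
        (forall v : 'rV[K]_r, (forall i, v *m D i = 0) -> v = 0) &
        \rank (\matrix_(i < n) bT i) = s].

(* Main.v *)
Require Import Defs.
From HB Require Import structures.
From mathcomp Require Import all_boot all_order all_algebra.
From mathcomp Require Import ring.
From Stdlib Require Import Classical FunctionalExtensionality.
Set Implicit Arguments. Unset Strict Implicit. Unset Printing Implicit Defensive.
Import GRing.Theory.
Local Open Scope ring_scope.

Section Mx.
Variable K : fieldType.

Definition recomb n a b (G : 'M[K]_n) (X : 'I_n -> 'M[K]_(a,b)) :=
  fun i => \sum_k G i k *: X k.

Lemma recomb_sym n a b c (G : 'M[K]_n) (X : 'I_n -> 'M[K]_(a,b)) (Y : 'I_n -> 'M[K]_(b,c)) :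
 (forall k l, X k *m Y l = X l *m Y k) -> forall i j,
 recomb G X i *m recomb G Y j = recomb G X j *m recomb G Y i.
Proof.
move=> hyp.
have E : forall i j, recomb G X i *m recomb G Y j
   = \sum_k \sum_l (G i k * G j l) *: (X k *m Y l).
  move=> i' j'; rewrite /recomb mulmx_suml; apply eq_bigr => k _.
  rewrite mulmx_sumr; apply eq_bigr => l _.
  by rewrite -scalemxAl -scalemxAr scalerA.
move=> i j; rewrite !E [RHS]exchange_big /=; apply eq_bigr => k _; apply eq_bigr => l _.
by rewrite hyp mulrC.
Qed.

Lemma recombK n a b (U V : 'M[K]_n) (X : 'I_n -> 'M[K]_(a,b)) :
  U *m V = 1%:M -> forall i, recomb U (recomb V X) i = X i.
Proof.
move=> hUV i; rewrite /recomb.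
under eq_bigr do rewrite scaler_sumr.
rewrite exchange_big /=.
under eq_bigr => j _.
  under eq_bigr do rewrite scalerA.
  rewrite -scaler_suml.
  have -> : \sum_k U i k * V k j = (U *m V) i j by rewrite mxE.
  rewrite hUV mxE.
  over.
rewrite (bigD1 i) //= eqxx scale1r big1 ?addr0 // => j /negbTE.
by rewrite eq_sym => ->; rewrite scale0r.
Qed.

Variables n r : nat.
Local Notation d := ((1 + r) + (n + 1))%N.

Lemma blockform_mul (b b' : 'rV[K]_r) (c c' : 'rV[K]_n) (D D' : 'M[K]_(r,n)) (f f' : 'cV[K]_n) :
 blockform b c D f *m blockform b' c' D' f' =
 block_mx 0 (block_mx (b *m D') (c *m f') 0 (D *m f')) 0 0.
Proof.
rewrite /blockform !mulmx_block ?mulmx0 ?mul0mx ?addr0 ?add0r.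
by rewrite block_mx0 add_block_mx !addr0 !add0r block_mx0.
Qed.

Definition eqs (b : 'I_n -> 'rV[K]_r) (c : 'I_n -> 'rV[K]_n) (D : 'I_n -> 'M[K]_(r,n))
  (f : 'I_n -> 'cV[K]_n) :=
 forall i j, [/\ b i *m D j = b j *m D i, c i *m f j = c j *m f i & D i *m f j = D j *m f i].

Lemma comm_eqs b c D f :
  (forall i j, blockform (b i) (c i) (D i) (f i) *m blockform (b j) (c j) (D j) (f j)
             = blockform (b j) (c j) (D j) (f j) *m blockform (b i) (c i) (D i) (f i))
  <-> eqs b c D f.
Proof.
split => h i j.
- move: (h i j); rewrite !blockform_mul => /eq_block_mx [_ E _ _].
  by case/eq_block_mx: E => E1 E2 _ E4.
- by case: (h i j) => E1 E2 E3; rewrite !blockform_mul E1 E2 E3.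
Qed.

Lemma eqs_recomb (G : 'M[K]_n) b c D f : eqs b c D f ->
  eqs (recomb G b) (recomb G c) (recomb G D) (recomb G f).
Proof.
move=> h i j; split; apply: recomb_sym => k l; by case: (h k l).
Qed.

Definition Qmx (Hr : 'M[K]_r) (Mn : 'M[K]_n) : 'M[K]_d :=
  block_mx (block_mx 1%:M 0 0 Hr : 'M_(1 + r)) 0 0 (block_mx Mn 0 0 1%:M : 'M_(n + 1)).

Lemma Qmx_unit Hr Mn : Hr \in unitmx -> Mn \in unitmx -> Qmx Hr Mn \in unitmx.
Proof.
move=> h1 h2; rewrite unitmxE !det_ublock !det1 mul1r mulr1 unitrM -!unitmxE.
by rewrite h1 h2.
Qed.

Lemma conj_blockform Hr Mn b c D f b' c' D' f' :
  b' = b *m Hr -> c' = c *m Mn -> Hr *m D' = D *m Mn -> Mn *m f' = f ->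
  Qmx Hr Mn *m blockform b' c' D' f' = blockform b c D f *m Qmx Hr Mn.
Proof.
move=> -> -> E3 E4; rewrite /Qmx /blockform !mulmx_block ?mulmx0 ?mul0mx ?addr0 ?add0r.
by rewrite ?mulmx1 ?mul1mx ?mulmx0 ?mul0mx ?addr0 ?add0r E3 E4.
Qed.

Definition nb (s : nat) : 'I_n -> 'rV[K]_r := fun k => row k (pid_mx s : 'M_(n, r)).
Definition nf : 'I_n -> 'cV[K]_n := fun k => delta_mx k 0.
Definition cok (Dp : 'I_n -> 'M[K]_(r, n)) :=
  forall v : 'rV_r, (forall l, v *m Dp l = 0) -> v = 0.

Definition Phi s (P : 'M[K]_d) (G : 'M[K]_n) c0 Dp : mxtuple K n d :=
  fun i => P *m blockform (recomb G (nb s) i) (recomb G c0 i) (recomb G Dp i) (recomb G nf i)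
             *m invmx P.

Lemma sum_delta m (x : 'I_m -> K) j : \sum_k x k * ((k == j)%:R) = x j.
Proof.
by rewrite (bigD1 j) //= eqxx mulr1 big1 ?addr0 // => k /negbTE ->; rewrite mulr0.
Qed.

Lemma Phi_X s P G c0 Dp : (s <= r)%N -> (s <= n)%N -> P \in unitmx -> G \in unitmx ->
  eqs (nb s) c0 Dp nf -> cok Dp -> Xnrs s (Phi s P G c0 Dp).
Proof.
move=> sr sn hP hG he hc; split.
  move=> i j; rewrite /Phi.
  have hcm := (comm_eqs _ _ _ _).2 (eqs_recomb G he).
  by rewrite !mulmxA !(mulmxKV hP) -!(mulmxA P) hcm.
exists P, (recomb G (nb s)), (recomb G c0), (recomb G Dp), (recomb G nf); split => //.
- have -> : \matrix_i (recomb G nf i)^T = G.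
    apply/matrixP => i j; rewrite !mxE summxE.
    rewrite -[RHS](sum_delta (G i)); apply eq_bigr => k _; rewrite !mxE.
    by rewrite eq_sym andbT.
  by rewrite row_free_unit.
- move=> v hv; apply: hc => l.
  rewrite -(recombK Dp (mulVmx hG) l) /recomb mulmx_sumr big1 // => i _.
  by rewrite -scalemxAr hv scaler0.
- have -> : \matrix_i recomb G (nb s) i = G *m pid_mx s.
    apply/matrixP => i j; rewrite !mxE summxE; apply eq_bigr => k _; by rewrite !mxE.
  by rewrite (eqmxMfull _ (_ : row_full G)) ?row_full_unit // rank_pid_mx.
Qed.

Lemma invmxM' m (A B : 'M[K]_m) : A \in unitmx -> B \in unitmx ->
  invmx (A *m B) = invmx B *m invmx A.
Proof.
move=> hA hB; have hAB : A *m B \in unitmx by rewrite unitmx_mul hA hB.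
rewrite -[RHS](mulmxK hAB).
have -> : invmx B *m invmx A *m (A *m B) = 1%:M.
  by rewrite mulmxA -(mulmxA (invmx B)) mulVmx // mulmx1 mulVmx.
by rewrite mul1mx.
Qed.

Lemma X_Phi s A : Xnrs s A -> exists P G c0 Dp,
  [/\ P \in unitmx, G \in unitmx, eqs (nb s) c0 Dp nf, cok Dp & A = Phi s P G c0 Dp].
Proof.
case=> hcomm [P [b [c [D [f [hP hA hF hcok hrk]]]]]].
set Bm := \matrix_i b i : 'M_(n, r).
set G := col_ebase Bm. set H := row_ebase Bm.
have hG : G \in unitmx by exact: col_ebase_unit.
have hH : H \in unitmx by exact: row_ebase_unit.
have eB : G *m pid_mx s *m H = Bm by rewrite -hrk mulmx_ebase.
set F := \matrix_i (f i)^T : 'M_n.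
have hFu : F \in unitmx by rewrite -row_free_unit.
set Mn := F^T *m invmx G^T. set Hr := invmx H.
have hMn : Mn \in unitmx by rewrite unitmx_mul unitmx_tr hFu unitmx_inv unitmx_tr.
have hHr : Hr \in unitmx by rewrite unitmx_inv.
set c0 := recomb (invmx G) (fun i => c i *m Mn).
set Dp := recomb (invmx G) (fun i => H *m D i *m Mn).
have cb : forall i, recomb G (nb s) i = b i *m Hr.
  move=> i; have -> : recomb G (nb s) i = row i (G *m pid_mx s).
    by apply/rowP => j; rewrite !mxE summxE; apply eq_bigr => k _; rewrite !mxE.
  have -> : b i = row i Bm by rewrite rowK.
  by rewrite -row_mul -eB mulmxK.
have cc : forall i, recomb G c0 i = c i *m Mn.
  by move=> i; rewrite /c0 recombK // mulmxV.
have cD : forall i, Hr *m recomb G Dp i = D i *m Mn.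
  by move=> i; rewrite /Dp recombK ?mulmxV // !mulmxA mulVmx ?mul1mx.
have cf : forall i, Mn *m recomb G nf i = f i.
  move=> i; have -> : recomb G nf i = col i G^T.
    apply/colP => j; rewrite !mxE summxE -[RHS](sum_delta (G i)).
    by apply eq_bigr => k _; rewrite !mxE andbT eq_sym.
  have -> : f i = col i F^T by apply/colP => j; rewrite !mxE.
  by rewrite !colE mulmxA mulmxKV ?unitmx_tr.
have hQ := Qmx_unit hHr hMn.
set Bf' := fun i => blockform (recomb G (nb s) i) (recomb G c0 i) (recomb G Dp i) (recomb G nf i).
have hx : forall i, blockform (b i) (c i) (D i) (f i) = Qmx Hr Mn *m Bf' i *m invmx (Qmx Hr Mn).
  by move=> i; rewrite /Bf' (conj_blockform (cb i) (cc i) (cD i) (cf i)) mulmxK.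
have hPQ : P *m Qmx Hr Mn \in unitmx by rewrite unitmx_mul hP hQ.
set R := P *m Qmx Hr Mn.
have hR : R \in unitmx by exact: hPQ.
have hAi : forall i, A i = R *m Bf' i *m invmx R.
  by move=> i; rewrite /R hA hx invmxM' // !mulmxA.
clearbody R.
have hB' : forall i, Bf' i = invmx R *m A i *m R.
  by move=> i; rewrite hAi (mulmxA (invmx R)) mulmxKV // mulKmx.
exists R, G, c0, Dp; split => //.
- have e1 : eqs (recomb G (nb s)) (recomb G c0) (recomb G Dp) (recomb G nf).
    apply/comm_eqs => i j; rewrite -/(Bf' i) -/(Bf' j) !hB'.
    by rewrite !mulmxA !(mulmxK hR) -!(mulmxA (invmx R)) hcomm.
  have e2 := eqs_recomb (invmx G) e1.
  have K1 : forall a b (X : 'I_n -> 'M[K]_(a, b)), recomb (invmx G) (recomb G X) = X.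
    by move=> a b' X; apply: functional_extensionality => i; rewrite recombK ?mulVmx.
  by rewrite !K1 in e2.
- move=> v hv.
  have h1 : forall i, (v *m H) *m D i = 0.
    move=> i; rewrite -(mulmxK hMn (v *m H *m D i)).
    have -> : v *m H *m D i *m Mn = 0.
      rewrite -!mulmxA (mulmxA H).
      have -> : H *m D i *m Mn = recomb G Dp i by rewrite /Dp recombK ?mulmxV.
      rewrite /recomb mulmx_sumr big1 // => l _.
      by rewrite -scalemxAr hv scaler0.
    by rewrite mul0mx.
  by rewrite -(mulmxK hH v) (hcok _ h1) mul0mx.
- apply: functional_extensionality => i; by rewrite hAi.
Qed.

End Mx.
Lemma polyfun_curve (K : fieldType) n m (Mp : 'I_n -> 'M[{poly K}]_m) (pe : {poly K}) :
 forall f, polyfun f -> exists (R : {poly K}) (N : nat), forall t, pe.[t] != 0 ->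
   f (fun i => pe.[t]^-1 *: map_mx (horner_eval t) (Mp i)) = R.[t] / pe.[t] ^+ N.
Proof.
move=> f; elim=> {f}.
- move=> c; exists c%:P, 0%N => t _; by rewrite hornerC expr0 divr1.
- move=> i j k; exists (Mp i j k), 1%N => t _.
  by rewrite !mxE horner_evalE expr1 mulrC.
- move=> f g _ [R1 [N1 h1]] _ [R2 [N2 h2]].
  exists (R1 * pe ^+ N2 + R2 * pe ^+ N1), (N1 + N2)%N => t ht.
  rewrite h1 // h2 // hornerD !hornerM !horner_exp exprD.
  have e1 : pe.[t] ^+ N1 != 0 by rewrite expf_neq0.
  have e2 : pe.[t] ^+ N2 != 0 by rewrite expf_neq0.
  by field; rewrite e1 e2.
- move=> f g _ [R1 [N1 h1]] _ [R2 [N2 h2]].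
  exists (R1 * R2), (N1 + N2)%N => t ht.
  rewrite h1 // h2 // !hornerM exprD.
  have e1 : pe.[t] ^+ N1 != 0 by rewrite expf_neq0.
  have e2 : pe.[t] ^+ N2 != 0 by rewrite expf_neq0.
  by field; rewrite e1 e2.
Qed.

Lemma curve_irred (K : closedFieldType) n m (S : mxtuple K n m -> Prop) :
 (exists A, S A) ->
 (forall a b, S a -> S b -> exists (Mp : 'I_n -> 'M[{poly K}]_m) (pe q : {poly K}),
    [/\ pe.[0] != 0, pe.[1] != 0, q != 0,
    a = (fun i => pe.[0]^-1 *: map_mx (horner_eval 0) (Mp i)) &
    b = (fun i => pe.[1]^-1 *: map_mx (horner_eval 1) (Mp i))] /\
    (forall t, q.[t] != 0 -> pe.[t] != 0 /\
        S (fun i => pe.[t]^-1 *: map_mx (horner_eval t) (Mp i)))) ->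
 zariski_irreducible S.
Proof.
move=> ne curve; split => // Z1 Z2 [F1 [hF1 hZ1]] [F2 [hF2 hZ2]] cov.
case: (classic (forall A, S A -> Z1 A)) => [h|h1]; [by left|].
case: (classic (forall A, S A -> Z2 A)) => [h|h2]; [by right|].
exfalso.
have [a ha] := not_all_ex_not _ _ h1.
have [Sa na] := imply_to_and _ _ ha.
have [b hb] := not_all_ex_not _ _ h2.
have [Sb nb] := imply_to_and _ _ hb.
have [f1 hf1] : exists f, ~ (F1 f -> f a = 0).
  by apply: not_all_ex_not => H; apply: na; apply/hZ1.
have [F1f1 f1a] := imply_to_and _ _ hf1.
have [f2 hf2] : exists f, ~ (F2 f -> f b = 0).
  by apply: not_all_ex_not => H; apply: nb; apply/hZ2.
have [F2f2 f2b] := imply_to_and _ _ hf2.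
have [Mp [pe [q [[pe0 pe1 q0 ea eb] hS]]]] := curve a b Sa Sb.
have [R1 [N1 hR1]] := @polyfun_curve _ _ _ Mp pe _ (hF1 _ F1f1).
have [R2 [N2 hR2]] := @polyfun_curve _ _ _ Mp pe _ (hF2 _ F2f2).
have R10 : R1 != 0.
  apply/eqP => R1z; apply: f1a; rewrite ea hR1 // R1z horner0; by rewrite mul0r.
have R20 : R2 != 0.
  apply/eqP => R2z; apply: f2b; rewrite eb hR2 // R2z horner0; by rewrite mul0r.
have Q0 : R1 * R2 * q != 0 by rewrite !mulf_neq0.
have [x] := closed_nonrootP (R1 * R2 * q) Q0.
rewrite /root.
rewrite !hornerM !mulf_eq0 !negb_or => /andP[/andP[r1 r2] qx].
have [pex Sx] := hS x qx.
have hex : forall N, pe.[x] ^+ N != 0 := fun N => expf_neq0 N pex.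
case: (cov _ Sx) => [/hZ1 z|/hZ2 z].
- move: (z _ F1f1); rewrite hR1 // => /eqP; rewrite mulf_eq0 invr_eq0 (negbTE r1).
  by rewrite (negbTE (hex _)).
- move: (z _ F2f2); rewrite hR2 // => /eqP; rewrite mulf_eq0 invr_eq0 (negbTE r2).
  by rewrite (negbTE (hex _)).
Qed.

Section Curve.
Variable K : fieldType.
Variables n r s : nat.
Local Notation d := ((1 + r) + (n + 1))%N.

Definition interp p q (t : K) (x y : 'M[K]_(p,q)) := (1 - t) *: x + t *: y.
Definition interpF p q (t : K) (x y : 'I_n -> 'M[K]_(p,q)) := fun k => interp t (x k) (y k).

Lemma interp0 p q (x y : 'M[K]_(p,q)) : interp 0 x y = x.
Proof. by rewrite /interp subr0 scale1r scale0r addr0. Qed.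
Lemma interp1 p q (x y : 'M[K]_(p,q)) : interp 1 x y = y.
Proof. by rewrite /interp subrr scale0r add0r scale1r. Qed.
Lemma interpF0 p q (x y : 'I_n -> 'M[K]_(p,q)) : interpF 0 x y = x.
Proof. by apply: functional_extensionality => k; rewrite /interpF interp0. Qed.
Lemma interpF1 p q (x y : 'I_n -> 'M[K]_(p,q)) : interpF 1 x y = y.
Proof. by apply: functional_extensionality => k; rewrite /interpF interp1. Qed.

Definition lin p q (x y : 'M[K]_(p,q)) : 'M[{poly K}]_(p,q) :=
  \matrix_(i, j) ((x i j)%:P * (1 - 'X) + (y i j)%:P * 'X).
Definition cst p q (x : 'M[K]_(p,q)) : 'M[{poly K}]_(p,q) := map_mx polyC x.

Lemma eval_lin t p q (x y : 'M[K]_(p,q)) : map_mx (horner_eval t) (lin x y) = interp t x y.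
Proof.
apply/matrixP => i j; rewrite !mxE horner_evalE !hornerE.
by rewrite mulrC [y i j * _]mulrC.
Qed.

Lemma eval_cst t p q (x : 'M[K]_(p,q)) : map_mx (horner_eval t) (cst x) = x.
Proof. by apply/matrixP => i j; rewrite !mxE horner_evalE hornerC. Qed.

Definition recP a b (Gp : 'M[{poly K}]_n) (X : 'I_n -> 'M[{poly K}]_(a,b)) :=
  fun i => \sum_k Gp i k *: X k.

Lemma map_recP t a b Gp (X : 'I_n -> 'M[{poly K}]_(a,b)) Y i :
  (forall k, map_mx (horner_eval t) (X k) = Y k) ->
  map_mx (horner_eval t) (recP Gp X i) = recomb (map_mx (horner_eval t) Gp) Y i.
Proof.
move=> hY; rewrite /recP /recomb; apply/matrixP => u v.
rewrite !mxE !summxE rmorph_sum; apply eq_bigr => k _.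
by rewrite !mxE rmorphM -hY mxE.
Qed.

Definition bfP (b : 'rV[{poly K}]_r) (c : 'rV[{poly K}]_n) (D : 'M[{poly K}]_(r, n))
  (f : 'cV[{poly K}]_n) : 'M[{poly K}]_d :=
  block_mx (block_mx 0 b 0 0 : 'M_(1 + r, 1 + r))
           (block_mx c 0 D 0 : 'M_(1 + r, n + 1))
           0
           (block_mx 0 f 0 0 : 'M_(n + 1, n + 1)).

Lemma map_bfP t b c D f :
  map_mx (horner_eval t) (bfP b c D f) =
  blockform (map_mx (horner_eval t) b) (map_mx (horner_eval t) c)
            (map_mx (horner_eval t) D) (map_mx (horner_eval t) f).
Proof. by rewrite /bfP /blockform !map_block_mx !map_mx0. Qed.

Variables (Pa Pb : 'M[K]_d) (Ga Gb : 'M[K]_n) (ca cb : 'I_n -> 'rV[K]_n)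
  (Da Db : 'I_n -> 'M[K]_(r, n)).

Definition Mp : 'I_n -> 'M[{poly K}]_d := fun i =>
  lin Pa Pb *m bfP (recP (lin Ga Gb) (fun k => cst (@nb K n r s k)) i)
                   (recP (lin Ga Gb) (fun k => lin (ca k) (cb k)) i)
                   (recP (lin Ga Gb) (fun k => lin (Da k) (Db k)) i)
                   (recP (lin Ga Gb) (fun k => cst (@nf K n k)) i)
   *m \adj (lin Pa Pb).

Definition pe : {poly K} := \det (lin Pa Pb).

Lemma pe_eval t : pe.[t] = \det (interp t Pa Pb).
Proof. by rewrite -horner_evalE -det_map_mx eval_lin. Qed.

Lemma gamma_Phi t i : \det (interp t Pa Pb) != 0 ->
  pe.[t]^-1 *: map_mx (horner_eval t) (Mp i) =
  Phi s (interp t Pa Pb) (interp t Ga Gb) (interpF t ca cb) (interpF t Da Db) i.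
Proof.
move=> hd.
rewrite /Mp !map_mxM map_mx_adj map_bfP eval_lin.
rewrite (map_recP _ _ (fun k => eval_cst t _)) (map_recP _ _ (fun k => eval_lin t _ _)).
rewrite (map_recP _ _ (fun k => eval_lin t _ _)) (map_recP _ _ (fun k => eval_cst t _)).
rewrite eval_lin pe_eval /Phi /invmx.
have -> : interp t Pa Pb \in unitmx by rewrite unitmxE unitfE.
by rewrite scalemxAr.
Qed.

End Curve.

Section Final.
Variable K : fieldType.
Variables n r : nat.

Definition Mcat (Dp : 'I_n -> 'M[K]_(r, n)) : 'M[K]_(r, n * n) :=
  \matrix_(a, j) (mxvec (\matrix_(l, b) Dp l a b)) 0 j.

Lemma Mcat_key (v : 'rV[K]_r) Dp l b :
  (v *m Mcat Dp) 0 (mxvec_index l b) = (v *m Dp l) 0 b.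
Proof. by rewrite !mxE; apply eq_bigr => a _; rewrite !mxE mxvecE mxE. Qed.

Lemma Mcat_mul (v : 'rV[K]_r) (Dp : 'I_n -> 'M[K]_(r, n)) : (forall l, v *m Dp l = 0) <-> v *m Mcat Dp = 0.
Proof.
split => h.
- apply/rowP => j; case/mxvec_indexP: j => l b; by rewrite Mcat_key h !mxE.
- move=> l; apply/rowP => b; by rewrite -Mcat_key h !mxE.
Qed.

Lemma cok_free (Dp : 'I_n -> 'M[K]_(r, n)) : cok Dp -> row_free (Mcat Dp).
Proof. by move=> h; apply: inj_row_free => v /Mcat_mul /h. Qed.

Lemma free_cok (Dp : 'I_n -> 'M[K]_(r, n)) (R : 'M[K]_(n * n, r)) : Mcat Dp *m R \in unitmx -> cok Dp.
Proof.
move=> hu v /Mcat_mul hv.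
by rewrite -(mulmxK hu v) mulmxA hv !mul0mx.
Qed.

Lemma Mcat_interp t Da Db : Mcat (interpF t Da Db) = interp t (Mcat Da) (Mcat Db).
Proof.
apply/matrixP => a j; case/mxvec_indexP: j => l b.
by rewrite !mxE !mxvecE !mxE.
Qed.

Lemma eqs_interp s (t : K) (ca cb : 'I_n -> 'rV[K]_n) (Da Db : 'I_n -> 'M[K]_(r, n)) :
  eqs (@nb K n r s) ca Da (@nf K n) -> eqs (@nb K n r s) cb Db (@nf K n) ->
  eqs (@nb K n r s) (interpF t ca cb) (interpF t Da Db) (@nf K n).
Proof.
move=> ha hb i j; case: (ha i j) => a1 a2 a3; case: (hb i j) => b1 b2 b3.
rewrite /interpF /interp; split.
- by rewrite !mulmxDr -!scalemxAr a1 b1.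
- by rewrite !mulmxDl -!scalemxAl a2 b2.
- by rewrite !mulmxDl -!scalemxAl a3 b3.
Qed.

End Final.

Section Example.
Variable K : fieldType.
Variables n r : nat.

Definition Dex : 'I_n -> 'M[K]_(r, n) :=
  fun l => \matrix_(a, b) (((a : nat) == l) && ((b : nat) == l))%:R.

Lemma Dex_eqs s : eqs (@nb K n r s) (fun _ => 0) Dex (@nf K n).
Proof.
move=> i j; split.
- apply/rowP => b; rewrite !mxE; apply eq_bigr => m _; rewrite !mxE.
  rewrite -!natrM; congr (_%:R).
  case: i j m b => [i ?] [j ?] [m ?] [b ?] /=.
  case: (eqVneq i m) => [<-|?]; case: (eqVneq j i) => [->|?]; rewrite ?eqxx ?muln0 ?mul0n //=.
- by rewrite !mul0mx.
- apply/colP => a; rewrite !mxE.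
  under eq_bigr do rewrite !mxE andbT.
  under [RHS]eq_bigr do rewrite !mxE andbT.
  rewrite !sum_delta.
  by case: (eqVneq (nat_of_ord j) (nat_of_ord i)) => [->|ne] //; rewrite !andbF.
Qed.

Lemma Dex_cok : (r <= n)%N -> cok Dex.
Proof.
move=> hrn v hv; apply/rowP => a.
have := hv (widen_ord hrn a) => /rowP/(_ (widen_ord hrn a)).
rewrite !mxE (bigD1 a) //= !mxE /= !eqxx mulr1 big1 ?addr0 // => m hm.
have hm' : ((m : nat) == a) = false by apply/negbTE.
by rewrite !mxE /= eqxx andbT hm' mulr0.
Qed.
End Example.


Theorem lemma4p4 (K : closedFieldType) (hchar : [pchar K] =i pred0)
  (n r s : nat) (hs1 : (1 <= s)%N) (hsr : (s <= r)%N) (hrn : (r <= n)%N) :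
  zariski_irreducible (@Xnrs K n r s).
Proof.
have hsn : (s <= n)%N := leq_trans hsr hrn.
apply: curve_irred.
  exists (Phi s 1%:M 1%:M (fun _ => 0) (@Dex K n r)).
  apply: Phi_X => //; [exact: unitmx1|exact: unitmx1|exact: Dex_eqs|exact: Dex_cok].
move=> a b Xa Xb.
have [Pa [Ga [ca [Da [hPa hGa hea hca ea]]]]] := X_Phi Xa.
have [Pb [Gb [cb [Db [hPb hGb heb hcb eb]]]]] := X_Phi Xb.
have [Rw hRw] := row_freeP (cok_free hca).
pose q := pe Pa Pb * \det (lin Ga Gb) * \det (lin (Mcat Da) (Mcat Db) *m cst Rw).
have q_eval : forall t, q.[t] = \det (interp t Pa Pb) * \det (interp t Ga Gb)
                               * \det (Mcat (interpF t Da Db) *m Rw).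
  move=> t; rewrite !hornerM pe_eval -!horner_evalE -!det_map_mx map_mxM.
  by rewrite !eval_lin eval_cst Mcat_interp.
have hdA : \det Pa != 0 by rewrite -unitfE -unitmxE.
have hdB : \det Pb != 0 by rewrite -unitfE -unitmxE.
exists (Mp s Pa Pb Ga Gb ca cb Da Db), (pe Pa Pb), q; split; first split.
- by rewrite pe_eval interp0.
- by rewrite pe_eval interp1.
- apply/eqP => q0; have := q_eval 0; rewrite q0 horner0 !interp0 interpF0 hRw det1 mulr1.
  move/esym/eqP; rewrite mulf_eq0 (negbTE hdA) /= => /eqP hG0.
  by move: hGa; rewrite unitmxE unitfE hG0 eqxx.
- rewrite ea; apply: functional_extensionality => i.
  by rewrite gamma_Phi ?interp0 ?interpF0 // interp0.
- rewrite eb; apply: functional_extensionality => i.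
  by rewrite gamma_Phi ?interp1 ?interpF1 // interp1.
- move=> t; rewrite q_eval !mulf_eq0 !negb_or => /andP[/andP[h1 h2] h3].
  split; first by rewrite pe_eval.
  have -> : (fun i => (pe Pa Pb).[t]^-1 *: map_mx (horner_eval t) (Mp s Pa Pb Ga Gb ca cb Da Db i))
     = Phi s (interp t Pa Pb) (interp t Ga Gb) (interpF t ca cb) (interpF t Da Db).
    by apply: functional_extensionality => i; rewrite gamma_Phi.
  apply: Phi_X => //.
  + by rewrite unitmxE unitfE.
  + by rewrite unitmxE unitfE.
  + exact: eqs_interp.
  + by apply: (free_cok (R := Rw)); rewrite unitmxE unitfE.
Qed.
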